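(* Every connected triangulated $2$-manifold (possibly with boundary) has a facet path.
   Context: A triangulated $2$-manifold is a finite collection of triangles (called facets), each with three distinct vertices, glued together along edges so that the resulting space is a $2$-manifold, possibly with boundary; it need not be a simplicial complex (two facets may share more than one edge). The (vertex-facet) incidence graph is the bipartite graph whose nodes are the facets and vertices, with an arc $(v,f)$ whenever $v$ is a vertex of $f$. A facet path is a trail $(v_0,f_1,v_1,f_2,\dots,f_k,v_k)$ in the incidence graph (consecutive nodes adjacent, no arc repeated) that contains every facet node exactly once; vertex nodes may repeat. *)

(* Defs.v *)
From mathcomp Require Import all_boot.
Set Implicit Arguments. Unset Strict Implicit. Unset Printing Implicit Defensive.

(* A triangulated 2-manifold (possibly with boundary), not necessarily a
   simplicial complex.  Facets have type F, vertices type V.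
   - [vx f i] is the vertex at corner i of facet f (i : 'I_3);
     the three vertices of a facet are distinct ([vx_inj]).
   - side i of facet f is the edge opposite corner i; [glue f i] is
     [Some (g, j)] when side i of f is glued to side j of g, [None] when it
     is a boundary edge.  Gluing is a partial involution between sides of
     distinct facets, and glued sides have the same pair of endpoints (this
     determines the identification of their endpoints).
   - vertices are exactly the points obtained from corners under the gluing,
     and the space is a 2-manifold at each vertex: for every vertex v the
     corners at v form one connected chain/cycle (its link) under
     "the two facets are glued along a side through these corners"
     ([link_connected]); every vertex is a corner of some facet. *)

Definition side_vx (V : finType) (vx : 'I_3 -> V) (i : 'I_3) : {set V} :=
  [set vx k | k in [pred k : 'I_3 | k != i]].

Definition corner_adj (F V : finType) (vx : F -> 'I_3 -> V)
  (glue : F -> 'I_3 -> option (F * 'I_3)) : rel (F * 'I_3) :=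
  fun c d => [exists i : 'I_3, (i != c.2) &&
     [exists j : 'I_3, [&& glue c.1 i == Some (d.1, j), d.2 != j &
                           vx d.1 d.2 == vx c.1 c.2]]].

Record tri2manifold (F V : finType) := Tri2Manifold {
  vx : F -> 'I_3 -> V;
  glue : F -> 'I_3 -> option (F * 'I_3);
  vx_inj : forall f, injective (vx f);
  glue_invol : forall f i g j, glue f i = Some (g, j) -> glue g j = Some (f, i);
  glue_other : forall f i g j, glue f i = Some (g, j) -> g != f;
  glue_vx : forall f i g j, glue f i = Some (g, j) ->
              side_vx (vx f) i = side_vx (vx g) j;
  vx_surj : forall v : V, exists f i, vx f i = v;
  link_connected : forall c d : F * 'I_3, vx c.1 c.2 = vx d.1 d.2 ->
              connect (corner_adj vx glue) c d
}.

Definition is_vertex (F V : finType) (T : tri2manifold F V) (v : V) (f : F) : bool :=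
  [exists i : 'I_3, vx T f i == v].

Definition inc_rel (F V : finType) (T : tri2manifold F V) : rel (V + F) :=
  fun x y => match x, y with
             | inl v, inr f => is_vertex T v f
             | inr f, inl v => is_vertex T v f
             | _, _ => false
             end.

(* the space is connected: nonempty, and any two nodes of the incidence
   graph are joined (equivalent to topological connectedness of the union
   of the closed triangles) *)
Definition tri_connected (F V : finType) (T : tri2manifold F V) : Prop :=
  0 < #|F| /\ forall x y : V + F, connect (inc_rel T) x y.

(* A trail (v0, f1, v1, ..., fk, vk) is encoded by v0 and
   s = [:: (f1, v1); ...; (fk, vk)]. *)
Fixpoint trail_arcs (F V : finType) (v0 : V) (s : seq (F * V)) : seq (V * F) :=
  match s with
  | [::] => [::]
  | (f, v) :: s' => (v0, f) :: (v, f) :: trail_arcs v s'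
  end.

Fixpoint trail_adj (F V : finType) (T : tri2manifold F V) (v0 : V)
  (s : seq (F * V)) : bool :=
  match s with
  | [::] => true
  | (f, v) :: s' => [&& is_vertex T v0 f, is_vertex T v f & trail_adj T v s']
  end.

(* facet path: a trail in the incidence graph (consecutive nodes adjacent,
   no arc repeated) containing every facet node exactly once *)
Definition facet_path (F V : finType) (T : tri2manifold F V) (v0 : V)
  (s : seq (F * V)) : Prop :=
  [/\ trail_adj T v0 s, uniq (trail_arcs v0 s),
      uniq (map fst s) & forall f : F, f \in map fst s].

(* Main.v *)
Require Import Defs.
From mathcomp Require Import all_boot.
Set Implicit Arguments. Unset Strict Implicit. Unset Printing Implicit Defensive.

Section Main.
Variables (F V : finType) (T : tri2manifold F V).
Local Notation vx := (vx T).
Local Notation glue := (glue T).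

Definition adjF : rel F :=
  fun f h => [exists j : 'I_3, [exists j' : 'I_3, glue f j == Some (h, j')]].

Lemma adjF_sym : symmetric adjF.
Proof.
suff H : forall f h, adjF f h -> adjF h f.
  by move=> f h; apply/idP/idP; apply: H.
move=> f h /existsP[j /existsP[j' /eqP E]].
by apply/existsP; exists j'; apply/existsP; exists j; rewrite (glue_invol E).
Qed.

Lemma adjF_irr f : ~~ adjF f f.
Proof.
apply/negP => /existsP[j /existsP[j' /eqP E]].
by move: (glue_other E); rewrite eqxx.
Qed.

Definition rS (S : {set F}) : rel F := fun a b => [&& a \in S, b \in S & adjF a b].

Lemma rS_sym S : symmetric (rS S).
Proof. by move=> a b; rewrite /rS adjF_sym andbCA. Qed.

Definition conn_set (S : {set F}) :=
  forall a b, a \in S -> b \in S -> connect (rS S) a b.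

Fixpoint ok (v0 : V) (s : seq (F * V)) : bool :=
  match s with
  | [::] => true
  | (f, v) :: s' => [&& is_vertex T v0 f, is_vertex T v f, v0 != v & ok v s']
  end.

Definition lastv (v0 : V) (s : seq (F * V)) := last v0 (map snd s).

Lemma lastv_cons v0 f v s : lastv v0 ((f, v) :: s) = lastv v s.
Proof. by []. Qed.

Lemma ok_cat v0 s1 s2 : ok v0 (s1 ++ s2) = ok v0 s1 && ok (lastv v0 s1) s2.
Proof.
elim: s1 v0 => [|[f v] s1 IH] v0 //=.
by rewrite IH lastv_cons !andbA.
Qed.

Lemma lastv_cat v0 s1 s2 : lastv v0 (s1 ++ s2) = lastv (lastv v0 s1) s2.
Proof. by rewrite /lastv map_cat last_cat. Qed.

Fixpoint revp (v0 : V) (s : seq (F * V)) : seq (F * V) :=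
  match s with
  | [::] => [::]
  | (f, v) :: s' => rcons (revp v s') (f, v0)
  end.

Lemma revp_props v0 s : ok v0 s ->
  [/\ ok (lastv v0 s) (revp v0 s), lastv (lastv v0 s) (revp v0 s) = v0
    & map fst (revp v0 s) = rev (map fst s)].
Proof.
elim: s v0 => [|[f v] s IH] v0 //= /and4P[h1 h2 h3 h4].
have [o l m] := IH _ h4.
rewrite lastv_cons -cats1 ok_cat lastv_cat o l /= h1 h2 eq_sym h3 /=.
by split=> //; rewrite map_cat m rev_cons cats1.
Qed.

Definition Good x s (B : {set F}) (Y : {set V}) :=
  [/\ ok x s, uniq (map fst s), map fst s =i B & lastv x s \in Y].

Lemma Good_join x s1 B1 B2 Y1 Y2 : Good x s1 B1 Y1 ->
  (forall y, y \in Y1 -> exists s2, Good y s2 B2 Y2) ->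
  (forall f, f \in B1 -> f \in B2 -> False) ->
  exists s, Good x s (B1 :|: B2) Y2.
Proof.
move=> [o1 u1 m1 l1] H D.
have [s2 [o2 u2 m2 l2]] := H _ l1.
exists (s1 ++ s2); split.
- by rewrite ok_cat o1.
- rewrite map_cat cat_uniq u1 u2 /= andbT; apply/hasPn => f /=.
  rewrite m2 m1 => f2; apply/negP => f1; exact: (D f).
- by move=> f; rewrite map_cat mem_cat in_setU m1 m2.
- by rewrite lastv_cat.
Qed.

Lemma Good_single g x y : is_vertex T x g -> is_vertex T y g -> x != y ->
  Good x [:: (g, y)] [set g] [set y].
Proof.
move=> hx hy xy; split => //=; first by rewrite hx hy xy.
- by move=> f; rewrite !inE.
- by rewrite /lastv /= inE.
Qed.

Lemma Good_rev x s B Y : Good x s B Y -> Good (lastv x s) (revp x s) B [set x].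
Proof.
move=> [o u m l]; have [o' l' m'] := revp_props o.
split => //; first by rewrite m' rev_uniq.
- by move=> f; rewrite m' mem_rev m.
- by rewrite l' inE.
Qed.

Lemma Good_weak x s (B B' : {set F}) (Y Y' : {set V}) : Good x s B Y -> B =i B' -> {subset Y <= Y'} ->
  Good x s B' Y'.
Proof.
move=> [o u m l] BB YY; split => //; last exact: YY.
by move=> f; rewrite m BB.
Qed.


Definition cn (S : {set F}) (g : F) (j : 'I_3) (b : F) : bool :=
  (b \in S :\ g) &&
  (if glue g j is Some hj then connect (rS (S :\ g)) hj.1 b else false).

Definition Bj S g (j : 'I_3) : {set F} :=
  [set b | cn S g j b && [forall j' : 'I_3, (j' < j)%N ==> ~~ cn S g j' b]].

Lemma Bj_sub S g j b : b \in Bj S g j -> b \in S :\ g.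
Proof. by rewrite inE => /andP[/andP[]]. Qed.

Lemma Bj_disj S g j j' b : j != j' -> b \in Bj S g j -> b \in Bj S g j' -> False.
Proof.
wlog lt : j j' / (j' < j)%N.
  move=> W ne; case: (ltngtP j' j) => [h|h|h].
  - exact: W.
  - by move=> a b'; apply: (W j' j) => //; rewrite eq_sym.
  - by move: ne; rewrite (ord_inj h) eqxx.
move=> _; rewrite !inE => /andP[_ /forallP /(_ j')]; rewrite lt /=.
by move/negbTE => ->.
Qed.

Lemma connect_start (A : {set F}) h b : connect (rS A) h b -> b \in A -> h \in A.
Proof.
case/connectP => [[|x p]] /=; first by move=> _ ->.
by case/andP => /and3P[].
Qed.

Lemma connect_restrict (A B : {set F}) a c :
  (forall x y, x \in B -> rS A x y -> y \in B) -> B \subset A ->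
  a \in B -> connect (rS A) a c -> connect (rS B) a c.
Proof.
move=> cl sub aB /connectP[p pp ->]; apply/connectP; exists p => //.
elim: p a aB pp => //= x p IH a aB /andP[ax px].
have xB := cl _ _ aB ax.
rewrite IH // andbT /rS aB xB /=.
by case/and3P: ax.
Qed.

Lemma cn_closed S g j a c : cn S g j a -> rS (S :\ g) a c -> cn S g j c.
Proof.
rewrite /cn => /andP[aS]; case: (glue g j) => // hj hc ac.
have := ac; rewrite /rS => /and3P[_ -> _] /=.
exact: connect_trans hc (connect1 ac).
Qed.

Lemma Bj_closed S g j x y : x \in Bj S g j -> rS (S :\ g) x y -> y \in Bj S g j.
Proof.
rewrite !inE => /andP[cx /forallP fx] xy.
rewrite (cn_closed cx xy) /=; apply/forallP => j'; apply/implyP => lt.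
apply/negP => cy; move: (fx j'); rewrite lt /= => /negP; apply.
by apply: (cn_closed cy); rewrite rS_sym.
Qed.

Lemma Bj_partner S g j b : b \in Bj S g j ->
  exists h j', [/\ glue g j = Some (h, j'), h \in Bj S g j &
                   forall c, c \in Bj S g j -> connect (rS (Bj S g j)) h c].
Proof.
move=> bB; have := bB; rewrite inE => /andP[cb /forallP fb].
move: cb; rewrite /cn => /andP[bS].
case E: (glue g j) => [[h j']|] // hb.
have hS : h \in S :\ g by exact: connect_start hb bS.
have hB : h \in Bj S g j.
  rewrite inE /cn hS E connect0 /=; apply/forallP => j'' ; apply/implyP => lt.
  rewrite /cn; apply/negP => c2; move: (fb j''); rewrite lt /= /cn bS /=.
  move: c2; case: (glue g j'') => // h2 c2 /negP nb; apply: nb.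
  exact: connect_trans c2 hb.
exists h, j'; split => // c cB.
apply: connect_restrict (Bj_closed (j:=j)) _ hB _.
  by apply/subsetP => z /Bj_sub.
move: cB; rewrite inE /cn E => /andP[/andP[_ ->]].
done.
Qed.

Lemma Bj_conn S g j : conn_set (Bj S g j).
Proof.
move=> a b aB bB; have [h [j' [_ hB H]]] := Bj_partner aB.
apply: connect_trans (H _ bB).
by rewrite (sym_connect_sym (@rS_sym _)) H.
Qed.

Lemma reach_cn S g b : conn_set S -> g \in S -> b \in S :\ g -> exists j, cn S g j b.
Proof.
move=> cS gS bS'.
have bS : b \in S by move: bS'; rewrite inE => /andP[].
have bg : b != g by move: bS'; rewrite inE => /andP[/set1P/eqP].
have := cS _ _ gS bS; case/connectP => p pp lp.
suff H : forall y, y \in S -> path (rS S) y p -> b = last y p ->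
   (y = g -> exists j, cn S g j b) /\
   (y != g -> connect (rS (S :\ g)) y b \/ exists j, cn S g j b).
  by case: (H g gS pp lp) => /(_ erefl).
clear pp lp; elim: p => [|x p IH] y yS /=.
  move=> _ Eb; split; first by move=> E; move: bg; rewrite Eb E eqxx.
  by move=> _; left; rewrite Eb; exact: connect0.
move=> /andP[yx px] lpx.
have xS : x \in S by case/and3P: yx.
have [IH1 IH2] := IH x xS px lpx.
have xy : x != y.
  by apply/eqP => E; move: yx; rewrite /rS E => /and3P[_ _]; rewrite (negbTE (adjF_irr y)).
split.
- move=> Ey; subst y.
  case: (IH2 xy) => // cx.
  case/and3P: yx => _ _ /existsP[j /existsP[j' /eqP E]].
  exists j; rewrite /cn bS' E /=; exact: cx.
- move=> yg; case: (eqVneq x g) => [Ex|xg].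
  + by right; apply: IH1.
  + case: (IH2 xg) => [cx|]; last by right.
    left; apply: connect_trans cx; apply: connect1.
    rewrite /rS !inE yg xg yS xS /=; by case/and3P: yx.
Qed.

Lemma Bj_cover S g b : conn_set S -> g \in S -> b \in S :\ g -> exists j, b \in Bj S g j.
Proof.
move=> cS gS bS; have [j cj] := reach_cn cS gS bS.
suff H : forall m (j : 'I_3), (j <= m)%N -> cn S g j b -> exists j', b \in Bj S g j'.
  exact: H cj.
elim => [|m IH] j0.
  rewrite leqn0 => /eqP j00 c0; exists j0; rewrite inE c0 /=.
  by apply/forallP => j'; rewrite j00 ltn0.
move=> le c0; case: (boolP [forall j' : 'I_3, (j' < j0)%N ==> ~~ cn S g j' b]) => H.
  by exists j0; rewrite inE c0 H.
move: H; rewrite negb_forall => /existsP[j' ]; rewrite negb_imply negbK => /andP[lt c'].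
apply: (IH j') c'; rewrite -ltnS; exact: leq_trans lt le.
Qed.


Lemma three (a b c m : 'I_3) : a != b -> a != c -> b != c -> [|| m == a, m == b | m == c].
Proof.
by case: a => [[|[|[|a]]] ha] //; case: b => [[|[|[|b]]] hb] //;
   case: c => [[|[|[|c]]] hc] //; case: m => [[|[|[|m]]] hm].
Qed.

Lemma third (i k : 'I_3) : k != i -> exists l : 'I_3, (l != i) && (l != k).
Proof.
by case: i => [[|[|[|i]]] hi] //; case: k => [[|[|[|k]]] hk] // _;
  [ exists (Ordinal (isT : 2 < 3)) | exists (Ordinal (isT : 1 < 3))
  | exists (Ordinal (isT : 2 < 3)) | exists (Ordinal (isT : 0 < 3))
  | exists (Ordinal (isT : 1 < 3)) | exists (Ordinal (isT : 0 < 3)) ].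
Qed.

Lemma side_eq (g : F) (i k l : 'I_3) : k != i -> l != i -> l != k ->
  side_vx (vx g) i = [set vx g k; vx g l].
Proof.
move=> ki li lk; apply/setP => x; rewrite !inE.
apply/imsetP/orP.
- case=> m; rewrite inE => mi ->.
  have : [|| m == i, m == k | m == l] by apply: three; rewrite eq_sym.
  rewrite (negbTE mi) /= => /orP[/eqP->|/eqP->].
  + by left.
  + by right.
- case=> /eqP ->; [exists k | exists l] => //; by rewrite inE.
Qed.

Lemma isv (g : F) (m : 'I_3) : is_vertex T (vx g m) g.
Proof. by apply/existsP; exists m. Qed.

Lemma vx_neq (g : F) (a b : 'I_3) : a != b -> vx g a != vx g b.
Proof. by move=> ab; apply/eqP => /(@vx_inj _ _ T) E; rewrite E eqxx in ab. Qed.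

Lemma Good_end x s B Y (Y' : {set V}) : Good x s B Y -> lastv x s \in Y' -> Good x s B Y'.
Proof. by case. Qed.

Lemma main n : forall S : {set F}, #|S| <= n -> conn_set S ->
  forall g i k, g \in S -> k != i ->
  exists s, Good (vx g k) s S (side_vx (vx g) i).
Proof.
elim: n => [|n IH] S hS cS g i k gS ki.
  by move: hS; rewrite leqn0 => /eqP/cards0_eq E; rewrite E inE in gS.
have Ej : forall j x, x \in side_vx (vx g) j ->
    exists s, Good x s (Bj S g j) (side_vx (vx g) j).
  move=> j x hx.
  case: (set_0Vmem (Bj S g j)) => [E0|[b bB]].
    exists [::]; split => //; by move=> f; rewrite E0 inE.
  have [h [j' [E hB _]]] := Bj_partner bB.
  have sv := glue_vx E.
  move: hx; rewrite sv => /imsetP[k' hk' ->]; rewrite inE in hk'.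
  have le : #|Bj S g j| <= n.
    have sub : Bj S g j \subset S :\ g by apply/subsetP => z /Bj_sub.
    have := subset_leq_card sub; move: hS; rewrite (cardsD1 g S) gS add1n ltnS.
    by move=> a b'; exact: leq_trans b' a.
  have [s Gs] := IH _ le (@Bj_conn S g j) h j' k' hB hk'.
  by exists s.
have [l /andP[li lk]] := third ki.
have side_i := side_eq g ki li lk.
have side_l : side_vx (vx g) l = [set vx g k; vx g i].
  by apply: (side_eq g) => //; rewrite eq_sym.
have side_k : side_vx (vx g) k = [set vx g i; vx g l].
  by apply: (side_eq g) => //; rewrite eq_sym.
have gB : forall j f, f \in [set g] -> f \in Bj S g j -> False.
  move=> j f /set1P -> /Bj_sub; by rewrite !inE eqxx.
have pw := vx_neq g ki.
have pq : vx g k != vx g l by apply: vx_neq; rewrite eq_sym.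
have wq : vx g i != vx g l by apply: vx_neq; rewrite eq_sym.
have [s1 G1] := Ej l (vx g k) (ltac:(by rewrite side_l set21)).
have SB : forall e, e \in side_vx (vx g) l ->
    exists s, Good e s ([set g] :|: Bj S g k) [set vx g k; vx g l].
  move=> e; rewrite side_l => /set2P[->|->].
  - have [s2 G2] := Ej k (vx g i) (ltac:(by rewrite side_k set21)).
    case: (G2) => _ _ _; rewrite side_k => /set2P[z2|z2].
    + have [s3 G3] := Ej k (vx g l) (ltac:(by rewrite side_k set22)).
      case: (G3) => _ _ _; rewrite side_k => /set2P[z3|z3].
      * have G3r := Good_rev G3; rewrite z3 in G3r.
        apply: (Good_join (Good_single (isv g k) (isv g i) pw)); last exact: gB.
        move=> y /set1P ->; exists (revp (vx g l) s3).
        apply: Good_weak G3r _ _ => // y'; by rewrite !inE => ->; rewrite orbT.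
      * apply: (Good_join (Good_single (isv g k) (isv g l) pq)); last exact: gB.
        move=> y /set1P ->; exists s3; apply: Good_end G3 _.
        by rewrite z3 !inE eqxx orbT.
    + apply: (Good_join (Good_single (isv g k) (isv g i) pw)); last exact: gB.
      move=> y /set1P ->; exists s2; apply: Good_end G2 _.
      by rewrite z2 !inE eqxx orbT.
  - have [s2 G2] := Ej k (vx g i) (ltac:(by rewrite side_k set21)).
    have [s G] : exists s, Good (vx g i) s (Bj S g k :|: [set g]) [set vx g k].
      apply: (Good_join G2); last by move=> f a b; exact: gB b a.
      move=> y; rewrite side_k => yin; exists [:: (g, vx g k)].
      apply: Good_single; rewrite ?isv //.
        by case/set2P: yin => ->; apply: isv.
      case/set2P: yin => ->; first by rewrite eq_sym.
      by rewrite eq_sym.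
    exists s; apply: Good_weak G _ _.
      by move=> f; rewrite setUC.
    by move=> y; rewrite !inE => ->.
have D1 : forall f, f \in Bj S g l -> f \in [set g] :|: Bj S g k -> False.
  move=> f fl; rewrite in_setU => /orP[fg|fk]; first exact: gB fg fl.
  exact: Bj_disj lk fl fk.
have [s4 G4] := Good_join G1 SB D1.
have E' : forall y, y \in [set vx g k; vx g l] ->
    exists s, Good y s (Bj S g i) (side_vx (vx g) i).
  by move=> y hy; apply: Ej; rewrite side_i.
have D2 : forall f, f \in Bj S g l :|: ([set g] :|: Bj S g k) -> f \in Bj S g i -> False.
  move=> f; rewrite !in_setU => /orP[fl|/orP[fg|fk]] fi.
  - exact: Bj_disj li fl fi.
  - exact: gB fg fi.
  - exact: Bj_disj ki fk fi.
have [s5 G5] := Good_join G4 E' D2.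
exists s5; apply: Good_weak G5 _ _ => // f; apply/idP/idP.
- rewrite !in_setU => /orP[/orP[fl|/orP[fg|fk]]|fi].
  + by move: (Bj_sub fl); rewrite in_setD1 => /andP[].
  + by rewrite in_set1 in fg; rewrite (eqP fg).
  + by move: (Bj_sub fk); rewrite in_setD1 => /andP[].
  + by move: (Bj_sub fi); rewrite in_setD1 => /andP[].
- move=> fS; case: (eqVneq f g) => [->|fg].
    by rewrite !in_setU in_set1 eqxx /= orbT.
  have fS' : f \in S :\ g by rewrite in_setD1 fg fS.
  have [j fj] := Bj_cover cS gS fS'.
  have : [|| j == i, j == k | j == l] by apply: three; rewrite eq_sym.
  by case/or3P => /eqP Ej'; subst j; rewrite !in_setU fj ?orbT.
Qed.


Lemma share_conn f h v : is_vertex T v f -> is_vertex T v h -> connect adjF f h.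
Proof.
move=> /existsP[i /eqP fi] /existsP[j /eqP hj].
have := @link_connected _ _ T (f, i) (h, j); rewrite /= fi hj => /(_ erefl).
case/connectP => p pp lp; apply/connectP; exists (map fst p).
  apply: (homo_path (f := fst) (e := corner_adj vx glue)) pp => c d.
  case/existsP => i' /andP[_ /existsP[j' /and3P[/eqP E _ _]]].
  by apply/existsP; exists i'; apply/existsP; exists j'; rewrite E.
by have := last_map fst p (f, i); rewrite -lp /= => <-.
Qed.

Definition node_ok (f : F) (x : V + F) : bool :=
  match x with inl v => is_vertex T v f | inr f' => f' == f end.

Lemma inc_step x z f : inc_rel T x z -> node_ok f x ->
  exists2 f', node_ok f' z & connect adjF f f'.
Proof.
case: x => [v|f0]; case: z => [v'|f''] //=.
- by move=> vf'' fv; exists f'' => //; exact: share_conn fv vf''.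
- by move=> vf0 /eqP <-; exists f0 => //; exact: connect0.
Qed.

Lemma inc_conn x y : connect (inc_rel T) x y ->
  forall f h, node_ok f x -> node_ok h y -> connect adjF f h.
Proof.
case/connectP => p pp ->; elim: p x pp => [|z p IH] x /=.
  move=> _ f h; case: x => [v|f'] /=; first exact: share_conn.
  by move=> /eqP <- /eqP <-; exact: connect0.
case/andP => xz pz f h fx hl.
have [f' fz ff'] := inc_step xz fx.
exact: connect_trans ff' (IH _ pz _ _ fz hl).
Qed.

Lemma trail_of_ok v0 s : ok v0 s -> trail_adj T v0 s.
Proof. by elim: s v0 => [|[f v] s IH] v0 //= /and4P[-> -> _ /IH]. Qed.

Lemma arcs_fac (v0 : V) (s : seq (F * V)) (a : V * F) : a \in trail_arcs v0 s -> a.2 \in map fst s.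
Proof.
elim: s v0 => [|[f v] s IH] v0 //=.
rewrite !inE => /or3P[/eqP->|/eqP->|/IH ->]; by rewrite ?eqxx ?orbT.
Qed.

Lemma arcs_uniq v0 s : ok v0 s -> uniq (map fst s) -> uniq (trail_arcs v0 s).
Proof.
elim: s v0 => [|[f v] s IH] v0 //= /and4P[_ _ ne o] /andP[fn u].
rewrite IH // andbT inE.
have nf : forall w, (w, f) \notin trail_arcs v s.
  by move=> w; apply/negP => /arcs_fac /= fin; rewrite fin in fn.
by rewrite !nf xpair_eqE eqxx !andbT negb_or ne nf.
Qed.

End Main.

Theorem theorem4 (F V : finType) (T : tri2manifold F V) :
  tri_connected T -> exists (v0 : V) (s : seq (F * V)), facet_path T v0 s.
Proof.
case=> /card_gt0P[g _] ci.
have cS : conn_set T setT.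
  move=> a b _ _.
  have := inc_conn (ci (inr a) (inr b)) (f := a) (h := b); rewrite /= !eqxx => /(_ erefl erefl).
  have E : rS T setT =2 adjF T by move=> x y; rewrite /rS !in_setT.
  by rewrite (eq_connect E).
have [s [o u m _]] := main (n := #|[set: F]|) (leqnn _) cS (g := g)
  (i := ord0) (k := Ordinal (isT : 1 < 3)) (in_setT g) isT.
exists (vx T g (Ordinal (isT : 1 < 3))), s; split.
- exact: trail_of_ok o.
- exact: arcs_uniq o u.
- exact: u.
- by move=> f; rewrite m in_setT.
Qed.
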